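(* Let $\mathbb{F}$ be an infinite field with $\operatorname{char}(\mathbb{F})\neq 2$, let $G$ be a group with a group involution $\ast$ and a non-trivial orientation $\sigma$ such that $gg^\ast\in N=\ker\sigma$ for all $g\in G$, and let $\circledast$ be the associated oriented involution of $\mathbb{F}G$. If $\mathbb{F}G$ is normal with respect to $\circledast$, then $N^+\subseteq\zeta(G)$.
   Context: A group involution on $G$ is a map $\ast:G\to G$ with $(gh)^\ast=h^\ast g^\ast$ and $(g^\ast)^\ast=g$. An orientation is a group homomorphism $\sigma:G\to\{\pm1\}$. The oriented involution is $(\sum_g\alpha_g g)^\circledast=\sum_g\alpha_g\sigma(g)g^\ast$ on $\mathbb{F}G$. $\mathbb{F}G$ is normal if $\alpha\alpha^\circledast=\alpha^\circledast\alpha$ for all $\alpha\in\mathbb{F}G$. $N^+$ denotes the set of elements $g\in G$ with $g^\circledast=g$, i.e. $N^+=\{n\in N: n^\ast=n\}$. $\zeta(G)$ is the center of $G$. *)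

(* Defs.v *)
From HB Require Import structures.
From mathcomp Require Import all_boot all_order all_algebra.
Set Implicit Arguments. Unset Strict Implicit. Unset Printing Implicit Defensive.
Import Order.TTheory GRing.Theory Num.Theory.
Local Open Scope ring_scope.

Definition group_axioms (G : Type) (mul : G -> G -> G) (one : G) (inv : G -> G)
  : Prop :=
  (forall x y z, mul x (mul y z) = mul (mul x y) z) /\
  (forall x, mul one x = x) /\
  (forall x, mul x one = x) /\
  (forall x, mul (inv x) x = one) /\
  (forall x, mul x (inv x) = one).

Definition group_involution (G : Type) (mul : G -> G -> G) (star : G -> G)
  : Prop :=
  (forall g h, star (mul g h) = mul (star h) (star g)) /\
  (forall g, star (star g) = g).

Definition orientation (G : Type) (mul : G -> G -> G) (sigma : G -> int)
  : Prop :=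
  (forall g, sigma g = 1 \/ sigma g = -1) /\
  (forall g h, sigma (mul g h) = sigma g * sigma h).

(* Elements of the group algebra F G are represented as finite formal sums
   sum_i a_i g_i, i.e. lists of pairs (a_i, g_i).  Every element of F G has
   such a representation; two lists represent the same element iff their
   coefficient functions agree. *)
Definition gr_coef (F : fieldType) (G : eqType) (s : seq (F * G)) (g : G) : F :=
  \sum_(p <- s | p.2 == g) p.1.

Definition gr_mul (F : fieldType) (G : eqType) (mul : G -> G -> G)
  (s t : seq (F * G)) : seq (F * G) :=
  [seq (p.1 * q.1, mul p.2 q.2) | p <- s, q <- t].

Definition gr_oinv (F : fieldType) (G : eqType) (star : G -> G)
  (sigma : G -> int) (s : seq (F * G)) : seq (F * G) :=
  [seq (p.1 * (sigma p.2)%:~R, star p.2) | p <- s].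

Definition gr_normal (F : fieldType) (G : eqType) (mul : G -> G -> G)
  (star : G -> G) (sigma : G -> int) : Prop :=
  forall s : seq (F * G),
    gr_coef (gr_mul mul s (gr_oinv star sigma s)) =1
    gr_coef (gr_mul mul (gr_oinv star sigma s) s).

(* Main.v *)
Require Import Defs.
From mathcomp Require Import all_boot all_order all_algebra.
From mathcomp Require Import ring.
Import GRing.Theory Num.Theory.
Local Open Scope ring_scope.

Lemma coef_cons (F : fieldType) (G : eqType) (p : F * G) s g :
  gr_coef (p :: s) g = (if p.2 == g then p.1 else 0) + gr_coef s g.
Proof. by rewrite /gr_coef big_cons; case: ifP; rewrite ?add0r. Qed.

Lemma coef_nil (F : fieldType) (G : eqType) g : gr_coef ([::] : seq (F * G)) g = 0.
Proof. by rewrite /gr_coef big_nil. Qed.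

Lemma step (F : fieldType) (G : eqType)
  (mul : G -> G -> G) (star : G -> G) (sigma : G -> int) (x n : G) (b : F) p :
  gr_normal F mul star sigma -> sigma n = 1 -> star n = n ->
  let sx : F := (sigma x)%:~R in
  let c h : F := if h == p then 1 else 0 in
  sx * c (mul x (star x)) + b * c (mul x n) + b * sx * c (mul n (star x)) + b * b * c (mul n n)
  = sx * c (mul (star x) x) + sx * b * c (mul (star x) n) + b * c (mul n x) + b * b * c (mul n n).
Proof.
move=> Hn sn stn sx c.
have := Hn [:: (1, x); (b, n)] p.
rewrite /gr_mul /gr_oinv /= !coef_cons !coef_nil /= sn stn /c.
rewrite !mul1r !addr0 !mulr1.
by rewrite !(fun_if (fun t => _ * t)) !mulr1 !mulr0 !addrA.
Qed.

Lemma lin (F : comRingType) (s A B C D E X W : F) :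
  s*A + 1*B + 1*s*C + 1*1*W = s*X + s*1*D + 1*E + 1*1*W ->
  s*A + (-1)*B + (-1)*s*C + (-1)*(-1)*W = s*X + s*(-1)*D + (-1)*E + (-1)*(-1)*W ->
  (1+1)*(B + s*C) = (1+1)*(s*D + E).
Proof.
move=> h1 h2; apply/eqP; rewrite -subr_eq0.
have -> : (1+1)*(B + s*C) - (1+1)*(s*D + E) =
  (s*A + 1*B + 1*s*C + 1*1*W - (s*X + s*1*D + 1*E + 1*1*W)) -
  (s*A + (-1)*B + (-1)*s*C + (-1)*(-1)*W - (s*X + s*(-1)*D + (-1)*E + (-1)*(-1)*W)) by ring.
by rewrite h1 h2 !subrr.
Qed.

Lemma key (F : fieldType) (G : eqType)
  (mul : G -> G -> G) (star : G -> G) (sigma : G -> int) (x n : G) :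
  ~~ (2%N \in [pchar F]) ->
  gr_normal F mul star sigma -> sigma n = 1 -> star n = n ->
  sigma x = 1 \/ sigma x = -1 ->
  mul x n = mul n x \/ (sigma x = 1 /\ mul (star x) n = mul x n)
  \/ (sigma x = -1 /\ mul n (star x) = mul x n).
Proof.
move=> H2 Hn sn stn sx.
have two : (1 + 1 : F) != 0 by move: H2; rewrite inE /= => ->.
have E := @lin F _ _ _ _ _ _ _ _ (@step _ _ _ _ _ x n 1 (mul x n) Hn sn stn) (@step _ _ _ _ _ x n (-1) (mul x n) Hn sn stn).
move/(mulfI two): E; rewrite eqxx.
case: sx => ->; rewrite ?intrN /= ?mul1r ?mulN1r.
- case: (mul (star x) n =P mul x n) => [->|_]; first by right; left.
  case: (mul n x =P mul x n) => [->|_]; first by left.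
  case: (mul n (star x) =P mul x n) => _; rewrite ?addr0 => /eqP; rewrite ?oner_eq0 //.
  by rewrite (negbTE two).
- case: (mul n x =P mul x n) => [->|_]; first by left.
  case: (mul n (star x) =P mul x n) => [e|_]; first by right; right.
  case: (mul (star x) n =P mul x n) => _; rewrite ?mulr0 ?addr0 ?mulr1 ?oppr0 => /eqP.
    by rewrite addr0 -subr_eq0 opprK (negbTE two).
  by rewrite addr0 oner_eq0.
Qed.

Theorem lemma8 (F : fieldType) (G : eqType)
  (mul : G -> G -> G) (one : G) (inv : G -> G) (star : G -> G) (sigma : G -> int) :
  (forall s : seq F, exists x : F, x \notin s) ->
  ~~ (2%N \in [pchar F]) ->
  group_axioms mul one inv ->
  group_involution mul star ->
  orientation mul sigma ->
  (exists g, sigma g = -1) ->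
  (forall g, sigma (mul g (star g)) = 1) ->
  gr_normal F mul star sigma ->
  forall n : G, sigma n = 1 -> star n = n ->
  forall g : G, mul n g = mul g n.
Proof.
move=> _ H2 [A [L1 [R1 [LV RV]]]] [SM SS] [Spm Smul] _ _ Hn n sn stn g.
have cr : forall a b c, mul a c = mul b c -> a = b.
  move=> a b c e.
  by rewrite -(R1 a) -(R1 b) -(RV c) !A e.
have cl : forall a b c, mul c a = mul c b -> a = b.
  move=> a b c e.
  by rewrite -(L1 a) -(L1 b) -(LV c) -!A e.
have K := fun x => @key _ _ _ _ _ x n H2 Hn sn stn (Spm x).
case: (Spm g) => sg.
- case: (K g) => [e|[[_ e]|[c _]]]; first by [].
    have gs : star g = g by apply: (cr _ _ n).
    have sgn : sigma (mul g n) = 1 by rewrite Smul sg sn.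
    case: (K (mul g n)) => [e2|[[_ e2]|[c _]]].
    + by apply: (cr _ _ n); rewrite e2 A.
    + move: e2; rewrite SM stn gs => e2.
      by apply: (cr _ _ n).
    + by rewrite sgn in c.
  by rewrite sg in c.
- case: (K g) => [e|[[c _]|[_ e]]]; first by [].
    by rewrite sg in c.
  have sgn : sigma (mul g n) = -1 by rewrite Smul sg sn.
  case: (K (mul g n)) => [e2|[[c _]|[_ e2]]].
  + by apply: (cr _ _ n); rewrite e2 A.
  + by rewrite sgn in c.
  + move: e2; rewrite SM stn -e -A => e2.
    have e3 := cl _ _ n e2.
    have gs : g = star g by apply: (cr _ _ n); rewrite -e3 e.
    by rewrite -gs.
Qed.
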